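(* Let $c\in(0,1)$ and $C\ge1$ be constants such that for all $n\ge1$, all integers $0\le w\le cn$ and all integers $0\le i\le n/2$, one has $|K^{(n)}_w(i)|\le C\binom nw\left(1-\frac{2w}{n}\right)^i$. Let $\mathcal{C}\subseteq\mathbb{F}_2^n$ be a binary linear code with $\mathcal{C}^\perp\neq\{0\}$, and let $d^\perp<n/2$ be the dual distance of $\mathcal{C}$ (the minimum Hamming weight of a nonzero vector of $\mathcal{C}^\perp$); put $t^\perp=\lfloor(d^\perp-1)/2\rfloor$. Let $w$ be an integer with $0\le w\le cn$, let $\varepsilon>0$, and let $\rho$ be a pmf on $\mathbb{F}_2^n$ satisfying $d_{TV}(P_{\mathcal{C}^\perp}\ast\rho,P_{U_n})\le\varepsilon$. Then $$\frac{1}{\binom nw}\sum_{x:|x|=w}2^n\hat\rho(x)\le\frac{|\mathcal{C}^\perp|V_n(t^\perp)}{2^{n-1}}+Cn\left(1-\frac{2w}{n}\right)^{t^\perp}+2\varepsilon.$$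
   Context: Krawtchouk polynomial: $K^{(n)}_w(i)=\sum_{j=0}^w(-1)^j\binom ij\binom{n-i}{w-j}$. The Fourier transform of $f:\mathbb{F}_2^n\to\mathbb{R}$ is $\hat f(y)=2^{-n}\sum_{x\in\mathbb{F}_2^n}f(x)(-1)^{x^\intercal y}$. $|x|$ is Hamming weight; $P_{\mathcal{C}^\perp}$ is the uniform pmf on the dual code $\mathcal{C}^\perp$; $P_{U_n}$ is uniform on $\mathbb{F}_2^n$; $(f\ast g)(x)=\sum_y f(y)g(x-y)$; $V_n(t)=\sum_{j=0}^t\binom nj$; $d_{TV}(P,Q)=\frac12\sum_x|P(x)-Q(x)|$. *)

(* Defs.v *)
From mathcomp Require Import all_boot all_order all_algebra.
Set Implicit Arguments. Unset Strict Implicit. Unset Printing Implicit Defensive.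
Import Order.TTheory GRing.Theory Num.Theory.
Local Open Scope ring_scope.

Definition vec (n : nat) := {ffun 'I_n -> bool}.
Definition vzero (n : nat) : vec n := [ffun=> false].
Definition vadd (n : nat) (x y : vec n) : vec n := [ffun i => x i (+) y i].
Definition wt (n : nat) (x : vec n) : nat := #|[set i | x i]|.
Definition dot (n : nat) (x y : vec n) : bool := odd #|[set i | x i && y i]|.

Definition is_linear_code (n : nat) (C : {set vec n}) : Prop :=
  vzero n \in C /\ forall x y, x \in C -> y \in C -> vadd x y \in C.

Definition dual_code (n : nat) (C : {set vec n}) : {set vec n} :=
  [set y | [forall x in C, ~~ dot x y]].

Definition dual_distance (n : nat) (C : {set vec n}) : nat :=
  \big[minn/n.+1]_(y in dual_code C | y != vzero n) wt y.

Definition kraw (R : numDomainType) (n w i : nat) : R :=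
  \sum_(j < w.+1) (-1) ^+ j * ('C(i, j))%:R * ('C(n - i, w - j))%:R.

Definition fourier (R : fieldType) (n : nat) (f : vec n -> R) (y : vec n) : R :=
  (2 ^+ n)^-1 * \sum_(x : vec n) f x * (-1) ^+ dot x y.

Definition is_pmf (R : numDomainType) (n : nat) (p : vec n -> R) : Prop :=
  (forall x, 0 <= p x) /\ \sum_(x : vec n) p x = 1.

Definition unif_on (R : fieldType) (n : nat) (A : {set vec n}) (x : vec n) : R :=
  (if x \in A then 1 else 0) / (#|A|)%:R.

Definition unif_all (R : fieldType) (n : nat) (x : vec n) : R := (2 ^+ n)^-1.

Definition conv (R : pzRingType) (n : nat) (f g : vec n -> R) (x : vec n) : R :=
  \sum_(y : vec n) f y * g (vadd x y).

Definition dTV (R : numFieldType) (n : nat) (P Q : vec n -> R) : R :=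
  2^-1 * \sum_(x : vec n) `|P x - Q x|.

Definition hamball (n t : nat) : nat := \sum_(j < t.+1) 'C(n, j).

(* Main.v *)
Require Import Defs.
From mathcomp Require Import all_boot all_order all_algebra.
Set Implicit Arguments. Unset Strict Implicit. Unset Printing Implicit Defensive.
Import Order.TTheory GRing.Theory Num.Theory.
Local Open Scope ring_scope.

Lemma card_setE (T : finType) (P : pred T) : #|[set i | P i]| = (\sum_i (P i : nat))%N.
Proof.
rewrite cardsE -sum1_card big_mkcond /=; apply: eq_bigr => i _.
by rewrite unfold_in; case: (P i).
Qed.

Lemma dotE n (x y : vec n) : dot x y = \big[addb/false]_i (x i && y i).
Proof.
rewrite /dot card_setE (big_morph odd oddD (erefl _)).
by apply: eq_bigr => i _; case: (x i && y i).
Qed.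

Lemma dotDl n (x y z : vec n) : dot (vadd x y) z = dot x z (+) dot y z.
Proof.
rewrite !dotE -big_split /=; apply: eq_bigr => i _; rewrite /vadd ffunE.
by case: (x i); case: (y i); case: (z i).
Qed.

Lemma dotDr n (x y z : vec n) : dot z (vadd x y) = dot z x (+) dot z y.
Proof.
rewrite !dotE -big_split /=; apply: eq_bigr => i _; rewrite /vadd ffunE.
by case: (x i); case: (y i); case: (z i).
Qed.

Lemma dot0r n (x : vec n) : dot x (vzero n) = false.
Proof. by rewrite dotE big1 // => i _; rewrite ffunE andbF. Qed.

Definition ones n : vec n := [ffun=> true].

Lemma dot1l n (x : vec n) : dot (ones n) x = odd (wt x).
Proof. by rewrite /dot /wt; congr odd; apply: eq_card => i; rewrite !inE ffunE. Qed.

Lemma wt_le n (x : vec n) : (wt x <= n)%N.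
Proof. by rewrite /wt -[X in (_ <= X)%N]card_ord max_card. Qed.

Lemma wt_le' : True. Proof. by []. Qed.
Lemma wt1 n (x : vec n) : wt (vadd x (ones n)) = (n - wt x)%N.
Proof.
have := cardC [set i | x i]; rewrite card_ord => H.
have E : wt (vadd x (ones n)) = #|[predC [set i | x i]]|.
  by apply: eq_card => i; rewrite !inE /ones !ffunE addbT.
rewrite E; apply/eqP; rewrite -(eqn_add2l #|[set i | x i]|) H subnKC //.
exact: (wt_le x).
Qed.

Lemma vaddA n (x y z : vec n) : vadd x (vadd y z) = vadd (vadd x y) z.
Proof. by apply/ffunP => i; rewrite !ffunE addbA. Qed.
Lemma vaddC n (x y : vec n) : vadd x y = vadd y x.
Proof. by apply/ffunP => i; rewrite !ffunE addbC. Qed.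
Lemma vaddK n (x y : vec n) : vadd (vadd x y) y = x.
Proof. by apply/ffunP => i; rewrite !ffunE addbK. Qed.
Lemma vadd0 n (x : vec n) : vadd x (vzero n) = x.
Proof. by apply/ffunP => i; rewrite !ffunE addbF. Qed.
Lemma vadd_inj n (y : vec n) : injective (fun x : vec n => vadd x y).
Proof. by move=> a b /(congr1 (fun z => vadd z y)); rewrite !vaddK. Qed.

Lemma dual0 n (C : {set vec n}) : vzero n \in dual_code C.
Proof. by rewrite inE; apply/forall_inP => x _; rewrite dot0r. Qed.

Lemma dualD n (C : {set vec n}) y z : y \in dual_code C -> z \in dual_code C ->
  vadd y z \in dual_code C.
Proof.
rewrite !inE => /forall_inP Hy /forall_inP Hz; apply/forall_inP => x Hx.
by rewrite dotDr (negbTE (Hy x Hx)) (negbTE (Hz x Hx)).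
Qed.

Lemma coef_binom (R : comNzRingType) (c : R) (m j : nat) :
  ((1 + c *: ('X : {poly R})) ^+ m)`_j = c ^+ j *+ 'C(m, j).
Proof.
rewrite exprDn.
have -> : \sum_(i < m.+1) ((1 : {poly R}) ^+ (m - i) * (c *: 'X) ^+ i) *+ 'C(m, i)
   = \sum_(i < m.+1) (c ^+ i *+ 'C(m, i)) *: 'X^(i : nat).
  by apply: eq_bigr => i _; rewrite expr1n mul1r exprZn scalerMnl.
rewrite coef_sumMXn /=.
case: (ltnP j m.+1) => Hj.
  by rewrite (big_pred1 (Ordinal Hj)).
rewrite big_pred0 ?bin_small ?mulr0n // => i /=.
by apply/negbTE; rewrite neq_ltn (leq_trans (ltn_ord i) Hj).
Qed.

Lemma wtE n (x : vec n) : wt x = (\sum_i (x i : nat))%N.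
Proof. exact: card_setE. Qed.

Lemma genfun (R : comNzRingType) n (y : vec n) :
  \sum_(x : vec n) ((-1) ^+ dot y x) *: ('X ^+ wt x : {poly R})
  = \prod_(i < n) (1 + ((-1) ^+ y i) *: 'X).
Proof.
pose G (i : 'I_n) (b : bool) : {poly R} := if b then ((-1) ^+ y i) *: 'X else 1.
have -> : \prod_(i < n) (1 + ((-1) ^+ y i) *: ('X : {poly R}))
   = \prod_(i < n) \sum_(b : bool) G i b.
  by apply: eq_bigr => i _; rewrite big_bool /G addrC.
rewrite bigA_distr_bigA /=; apply: eq_bigr => x _.
have -> : \prod_i G i (x i) = \prod_i (((-1) ^+ (y i && x i))%:P * 'X^(x i)).
  apply: eq_bigr => i _; rewrite /G; case: (x i); rewrite ?andbT ?andbF.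
    by rewrite mul_polyC expr1.
  by rewrite expr0 mulr1 polyC1.
rewrite big_split /= -rmorph_prod prodrXr prodrXr mul_polyC.
by rewrite /dot card_setE signr_odd wtE.
Qed.

Lemma prod_cond (R : comNzRingType) n (P : pred 'I_n) (c : R) :
  \prod_(i < n | P i) c = c ^+ (\sum_i (P i : nat))%N.
Proof.
rewrite -prodrXr big_mkcond; apply: eq_bigr => i _.
by case: (P i); rewrite ?expr1 ?expr0.
Qed.

Lemma sum_notb n (y : vec n) : (\sum_i (~~ y i : nat))%N = (n - wt y)%N.
Proof.
have E : (\sum_i (y i : nat) + \sum_i (~~ y i : nat))%N = n.
  rewrite -big_split /= -[n in RHS]card_ord -sum1_card.
  by apply: eq_bigr => i _; case: (y i).
by apply/eqP; rewrite -(eqn_add2l (wt y)) subnKC ?wt_le // wtE E.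
Qed.

Lemma kraw_id (R : numDomainType) n w (y : vec n) :
  \sum_(x : vec n | wt x == w) (-1) ^+ dot y x = kraw R n w (wt y).
Proof.
have := congr1 (fun p : {poly R} => p`_w) (genfun R y).
rewrite /= coef_sumMXn => ->.
rewrite (bigID (fun i => y i)) /=.
rewrite (eq_bigr (fun _ => 1 + (-1) *: 'X)); last by move=> i ->; rewrite expr1.
rewrite [X in _ * X](eq_bigr (fun _ => 1 + 1 *: 'X)); last by move=> i /negbTE ->; rewrite expr0.
rewrite !prod_cond sum_notb -wtE coefM /kraw; apply: eq_bigr => j _.
by rewrite !coef_binom expr1n -mulr_natr.
Qed.

From mathcomp Require Import ring lra zify.

Lemma dot0l n (x : vec n) : dot (vzero n) x = false.
Proof. by rewrite dotE big1 // => i _; rewrite ffunE. Qed.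

Lemma wt0 n : wt (vzero n) = 0%N.
Proof. by rewrite wtE big1 // => i _; rewrite ffunE. Qed.

Lemma kraw0 (R : numDomainType) n w : kraw R n w 0 = ('C(n, w))%:R.
Proof.
rewrite /kraw big_ord_recl big1 ?addr0 => [|i _]; last by rewrite bin0n mulr0 mul0r.
by rewrite expr0 bin0 mul1r mul1r subn0 subn0.
Qed.

Lemma sphere (R : numDomainType) n w :
  \sum_(x : vec n | wt x == w) (1 : R) = ('C(n, w))%:R.
Proof.
rewrite -(kraw0 R n w) -(wt0 n) -kraw_id; apply: eq_bigr => x _.
by rewrite dot0l expr0.
Qed.

Lemma Kbound1 (R : numDomainType) n w (z : vec n) :
  `| \sum_(x : vec n | wt x == w) (-1) ^+ dot z x | <= ('C(n, w))%:R :> R.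
Proof.
rewrite -(sphere R n w); apply: le_trans (ler_norm_sum _ _ _) _.
by apply: ler_sum => x _; rewrite normrX normrN1 expr1n.
Qed.

Lemma Ksym (R : numDomainType) n w (z : vec n) :
  \sum_(x : vec n | wt x == w) (-1) ^+ dot (vadd z (ones n)) x
  = (-1) ^+ w * \sum_(x : vec n | wt x == w) (-1) ^+ dot z x :> R.
Proof.
rewrite mulr_sumr; apply: eq_bigr => x /eqP Hx.
by rewrite dotDl dot1l signr_addb Hx signr_odd mulrC.
Qed.

Lemma sum_le_t (R : numDomainType) n t :
  \sum_(x : vec n | (wt x <= t)%N) (1 : R) = (hamball n t)%:R.
Proof.
rewrite (partition_big (fun x : vec n => (inord (wt x) : 'I_t.+1)) predT) //=.
rewrite /hamball natr_sum; apply: eq_bigr => j _.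
rewrite -sphere; apply: eq_bigl => x.
apply/idP/idP.
  case/andP => H1 /eqP <-; rewrite inordK //.
move/eqP => Hx; rewrite Hx -ltnS ltn_ord /=; apply/eqP; apply: val_inj.
by rewrite /= inordK.
Qed.

Lemma ball (R : numDomainType) n t (d : vec n) :
  \sum_(x : vec n | (wt (vadd x d) <= t)%N) (1 : R) = (hamball n t)%:R.
Proof.
by rewrite -(sum_le_t R n t) [RHS](reindex_inj (@vadd_inj n d)).
Qed.

Lemma convA (R : realFieldType) n (D : {set vec n}) (A : pred (vec n)) (rho : vec n -> R) :
  vzero n \in D ->
  (forall x y, y \in D -> A (vadd x y) = A x) ->
  \sum_(x | A x) conv (unif_on R D) rho x = \sum_(x | A x) rho x.
Proof.
move=> D0 HA; rewrite /conv exchange_big /=.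
transitivity (\sum_y unif_on R D y * \sum_(x | A x) rho x).
  apply: eq_bigr => y _; rewrite -mulr_sumr.
  case: (boolP (y \in D)) => Hy; last by rewrite /unif_on (negbTE Hy) !mul0r.
  congr (_ * _); rewrite [RHS](reindex_inj (@vadd_inj n y)) /=.
  by apply: eq_bigl => x; rewrite HA.
rewrite -mulr_suml -[RHS]mul1r; congr (_ * _).
rewrite /unif_on -mulr_suml -big_mkcond /= sumr_const divff //.
by rewrite pnatr_eq0 -lt0n; apply/card_gt0P; exists (vzero n).
Qed.

Lemma tv_set (R : realFieldType) n (A : pred (vec n)) (P Q : vec n -> R) :
  \sum_(x | A x) P x - \sum_(x | A x) Q x <= 2 * dTV P Q.
Proof.
rewrite /dTV mulrA mulfV ?mul1r ?pnatr_eq0 // -sumrB.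
apply: le_trans (ler_sum _ (fun x _ => ler_norm (P x - Q x))) _.
by rewrite [X in _ <= X](bigID A) /= lerDl sumr_ge0.
Qed.

Lemma cnt (R : realFieldType) n (D : {set vec n}) t :
  \sum_(x | [exists d in D, (wt (vadd x d) <= t)%N || (wt (vadd (vadd x d) (ones n)) <= t)%N]) (1:R)
  <= (#|D|)%:R * 2 * (hamball n t)%:R.
Proof.
pose g (x d : vec n) : R := ((wt (vadd x d) <= t)%N)%:R + ((wt (vadd (vadd x d) (ones n)) <= t)%N)%:R.
have g0 x d : 0 <= g x d by rewrite /g addr_ge0.
apply: (@le_trans _ _ (\sum_x \sum_(d in D) g x d)).
  rewrite big_mkcond /=; apply: ler_sum => x _.
  case: ifP => [/exists_inP [d Hd Hx] | _]; last by apply: sumr_ge0.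
  rewrite (bigD1 d) //= -[X in X <= _]addr0 lerD //; last by apply: sumr_ge0.
  by rewrite /g; case/orP: Hx => ->; rewrite ?lerDl ?lerDr.
rewrite exchange_big /=.
have -> : (#|D|)%:R * 2 * (hamball n t)%:R = \sum_(d in D) (2 * (hamball n t)%:R) :> R.
  by rewrite sumr_const -mulr_natr; ring.
apply: ler_sum => d _; rewrite big_split /= mulr_natl mulr2n.
have E (P : pred (vec n)) : \sum_x (P x)%:R = \sum_(x | P x) (1 : R).
  by rewrite [RHS]big_mkcond; apply: eq_bigr => x _; case: (P x).
rewrite !E ball.
under eq_bigl do rewrite -vaddA.
by rewrite ball.
Qed.

Lemma dbl_aux a n : (a <= n)%N -> (n < a.*2)%N -> ((n - a).*2 <= n)%N.
Proof. rewrite -!addnn; lia. Qed.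

Theorem mainTheorem3 (R : realFieldType) (c C0 : R) :
  0 < c -> c < 1 -> 1 <= C0 ->
  (forall (n w i : nat), (1 <= n)%N -> w%:R <= c * n%:R -> (i.*2 <= n)%N ->
     `|kraw R n w i| <= C0 * ('C(n, w))%:R * (1 - 2 * w%:R / n%:R) ^+ i) ->
  forall (n : nat) (C : {set vec n}),
  is_linear_code C ->
  dual_code C != [set vzero n] ->
  forall d : nat, d = dual_distance C -> (d.*2 < n)%N ->
  let t := (d.-1)./2 in
  forall (w : nat) (eps : R) (rho : vec n -> R),
  w%:R <= c * n%:R -> 0 < eps ->
  is_pmf rho ->
  dTV (conv (unif_on R (dual_code C)) rho) (@unif_all R n) <= eps ->
  (('C(n, w))%:R)^-1 * \sum_(x : vec n | wt x == w) 2 ^+ n * fourier rho x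
    <= (#|dual_code C|)%:R * (hamball n t)%:R / 2 ^+ n.-1
       + C0 * n%:R * (1 - 2 * w%:R / n%:R) ^+ t + 2 * eps.
Proof.
move=> c0 c1 C1 HK n C _ _ d _ Hdn t w eps rho Hw Heps [rho0 rho1] Htv.
set D := dual_code C.
have n0 : (0 < n)%N by apply: leq_ltn_trans Hdn.
have nR : 0 < n%:R :> R by rewrite ltr0n.
have wn : (w < n)%N.
  rewrite -(ltr_nat R); apply: le_lt_trans Hw _.
  by rewrite -subr_gt0 -{1}[n%:R]mul1r -mulrBl mulr_gt0 // subr_gt0.
have Cnw : 0 < ('C(n, w))%:R :> R by rewrite ltr0n bin_gt0 ltnW.
set b := 1 - 2 * w%:R / n%:R.
have b1 : b <= 1.
  have : 0 <= 2 * w%:R / n%:R :> R by rewrite divr_ge0 // mulr_ge0.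
  rewrite /b; lra.
have b0 : 0 <= b.
  rewrite leNgt; apply/negP => bneg.
  have w0 : (0 < w)%N.
    rewrite lt0n; apply/negP => /eqP w0; move: bneg; rewrite /b w0 mulr0 mul0r subr0.
    by rewrite ltr10.
  have n2 : (1.*2 <= n)%N by apply: leq_trans wn.
  have := HK n w 1 n0 Hw n2; rewrite expr1.
  have : C0 * ('C(n, w))%:R * b < 0.
    by rewrite pmulr_rlt0 // mulr_gt0 // (lt_le_trans ltr01 C1).
  move=> H1 H2; have := le_lt_trans H2 H1; by rewrite ltNge normr_ge0.
pose inA (x : vec n) := [exists e in D, (wt (vadd x e) <= t)%N || (wt (vadd (vadd x e) (ones n)) <= t)%N].
have D0 : vzero n \in D by exact: dual0.
have invA x y : y \in D -> inA (vadd x y) = inA x.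
  have imp x' y' : y' \in D -> inA x' -> inA (vadd x' y').
    move=> Hy /exists_inP [e He Hx]; apply/exists_inP; exists (vadd y' e).
      exact: dualD.
    have -> : vadd (vadd x' y') (vadd y' e) = vadd x' e.
      by apply/ffunP => i; rewrite !ffunE; case: (x' i); case: (y' i); case: (e i).
    exact: Hx.
  move=> Hy; apply/idP/idP; last exact: imp.
  by move/(imp _ _ Hy); rewrite vaddK.
pose K (z : vec n) := \sum_(x : vec n | wt x == w) (-1) ^+ dot z x : R.
have HS : (('C(n, w))%:R)^-1 * \sum_(x : vec n | wt x == w) 2 ^+ n * fourier rho x
    = \sum_z rho z * (K z / ('C(n, w))%:R).
  rewrite mulrC mulr_suml.
  under eq_bigr do rewrite /fourier mulrA mulfV ?mul1r ?expf_neq0 ?pnatr_eq0 // mulr_suml.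
  rewrite exchange_big /=; apply: eq_bigr => z _.
  by rewrite /K mulrA mulr_sumr mulr_suml.
have C0p : 0 < C0 by apply: lt_le_trans ltr01 C1.
have bt i : (t <= i)%N -> b ^+ i <= b ^+ t by move=> Hti; apply: ler_wiXn2l.
have Kbd z : ~~ inA z -> `|K z| <= C0 * ('C(n, w))%:R * b ^+ t.
  move=> Hz.
  have Ht1 : (t < wt z)%N.
    rewrite ltnNge; apply: contra Hz => H; apply/exists_inP; exists (vzero n) => //.
    by rewrite vadd0 H.
  have Ht2 : (t < wt (vadd z (ones n)))%N.
    rewrite ltnNge; apply: contra Hz => H; apply/exists_inP; exists (vzero n) => //.
    by rewrite vadd0 H orbT.
  have Hcb : 0 <= C0 * ('C(n, w))%:R by rewrite mulr_ge0 // ltW.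
  case: (leqP (wt z).*2 n) => Hi.
    rewrite /K kraw_id; apply: le_trans (HK n w _ n0 Hw Hi) _.
    by rewrite ler_wpM2l // bt // ltnW.
  have -> : `|K z| = `|K (vadd z (ones n))|.
    by rewrite /K Ksym normrM normrX normrN1 expr1n mul1r.
  have Hi' : ((wt (vadd z (ones n))).*2 <= n)%N.
    by rewrite wt1 dbl_aux // wt_le.
  rewrite /K kraw_id; apply: le_trans (HK n w _ n0 Hw Hi') _.
  by rewrite ler_wpM2l // bt // ltnW.
rewrite HS (bigID inA) /=.
have P1 : \sum_(z | inA z) rho z * (K z / ('C(n, w))%:R) <= \sum_(z | inA z) rho z.
  apply: ler_sum => z _; rewrite -[X in _ <= X]mulr1 ler_wpM2l //.
  rewrite ler_pdivrMr // mul1r; apply: le_trans (ler_norm _) _; exact: Kbound1.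
have P2 : \sum_(z | ~~ inA z) rho z * (K z / ('C(n, w))%:R) <= C0 * b ^+ t.
  apply: (@le_trans _ _ (\sum_(z | ~~ inA z) rho z * (C0 * b ^+ t))).
    apply: ler_sum => z Hz; rewrite ler_wpM2l // ler_pdivrMr //.
    apply: le_trans (ler_norm _) _; apply: le_trans (Kbd z Hz) _.
    by rewrite mulrAC.
  rewrite -mulr_suml; apply: ler_piMl; first by rewrite mulr_ge0 ?exprn_ge0 // ltW.
  rewrite -rho1 [X in _ <= X](bigID inA) /= lerDr sumr_ge0 //.
have P3 : \sum_(z | inA z) rho z
    <= (#|D|)%:R * (hamball n t)%:R / 2 ^+ n.-1 + 2 * eps.
  have HC : \sum_(x | inA x) conv (unif_on R D) rho x = \sum_(x | inA x) rho x.
    exact: (convA rho D0 invA).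
  have T := tv_set inA (conv (unif_on R D) rho) (@unif_all R n).
  have U : \sum_(x | inA x) unif_all R x = (2 ^+ n)^-1 * \sum_(x | inA x) (1 : R).
    by rewrite mulr_sumr; apply: eq_bigr => x _; rewrite mulr1.
  have Cn : \sum_(x | inA x) (1 : R) <= (#|D|)%:R * 2 * (hamball n t)%:R := cnt R D t.
  have E2 : (#|D|)%:R * (hamball n t)%:R / 2 ^+ n.-1
       = (2 ^+ n)^-1 * ((#|D|)%:R * 2 * (hamball n t)%:R) :> R.
    have -> : 2 ^+ n = 2 * 2 ^+ n.-1 :> R by rewrite -exprS prednK.
    field.
    by rewrite expf_neq0 // pnatr_eq0.
  have h2 : 0 <= (2 ^+ n : R)^-1 by rewrite invr_ge0 exprn_ge0.
  have Cn' := ler_wpM2l h2 Cn.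
  move: T Cn' Htv; rewrite U E2 HC; lra.
have P4 : C0 * b ^+ t <= C0 * n%:R * b ^+ t.
  by rewrite -mulrA ler_pM2l // ler_peMl ?exprn_ge0 // ler1n.
move: P1 P2 P3 P4; clear; lra.
Qed.
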